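(* Let $\mathbf P=(P,\leq,{}',0,1)$ be a bounded poset which is the horizontal sum of Boolean posets $\mathbf P_{\alpha}=(P_{\alpha},\leq_{\alpha},{}'_{\alpha},0,1)$, $\alpha\in\Lambda$, and put $M(x,y)=L(U(x,y'),y)$ and $R(x,y)=L(U(L(x,y),x'))$. Then the Dedekind-MacNeille completion $\mathrm{DM}(\mathbf P)$ is a complete orthomodular lattice. Moreover, $\mathrm{DM}(\mathbf P)$ is a left residuated lattice with respect to the operations $x\odot y=(x\vee y')\wedge y$ and $x\to y=(x\wedge y)\vee x'$ obtained from $M$ and $R$ by the DM-transformation.
   Context: For $M\subseteq P$, $U(M)$ and $L(M)$ are the sets of upper and lower bounds of $M$; $U(a,b)=U(\{a,b\})$, $L(a,b)=L(\{a,b\})$. A poset with complementation is a bounded poset with antitone involution $'$ ($x\le y\Rightarrow y'\le x'$, $x''=x$) with $L(x,x')=\{0\}$, $U(x,x')=\{1\}$. A Boolean poset is a bounded poset with complementation $'$ that is distributive, i.e. $L(U(x,y),z)=L(U(L(x,z),L(y,z)))$ for all $x,y,z$. The horizontal sum of bounded posets is their disjoint union with bottoms identified to $0$ and tops identified to $1$. The Dedekind-MacNeille completion $\mathrm{DM}(\mathbf P)$ is the complete lattice of subsets $B\subseteq P$ with $L(U(B))=B$ ordered by inclusion, $P$ embedded via $x\mapsto L(\{x\})$, with antitone involution $X'=L(\{u'\mid u\in X\})$. The DM-transformation replaces $U(x,y)$ or $LU(x,y)$ by $x\vee y$ and $L(x,y)$ by $x\wedge y$. A lattice with complementation is orthomodular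 if $x\vee y=((x\vee y)\wedge y')\vee y$. A lattice with top $1$ is left residuated with respect to binary operations $\odot,\to$ if $x\odot 1=x=1\odot x$ and $x\odot y\le z \iff x\le y\to z$ for all $x,y,z$ ($\odot$ need not be associative or commutative). *)

(* Defs.v *)
Set Implicit Arguments.

Definition pair2 {T : Type} (a b : T) : T -> Prop := fun x => x = a \/ x = b.
Definition single {T : Type} (a : T) : T -> Prop := fun x => x = a.
Definition union {T : Type} (M N : T -> Prop) : T -> Prop := fun x => M x \/ N x.
Definition inter {T : Type} (M N : T -> Prop) : T -> Prop := fun x => M x /\ N x.

Definition Lb {T : Type} (le : T -> T -> Prop) (M : T -> Prop) : T -> Prop :=
  fun x => forall m, M m -> le x m.
Definition Ub {T : Type} (le : T -> T -> Prop) (M : T -> Prop) : T -> Prop :=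
  fun x => forall m, M m -> le m x.

Definition LA {T : Type} (A : T -> Prop) (le : T -> T -> Prop) (M : T -> Prop)
  : T -> Prop := fun x => A x /\ Lb le M x.
Definition UA {T : Type} (A : T -> Prop) (le : T -> T -> Prop) (M : T -> Prop)
  : T -> Prop := fun x => A x /\ Ub le M x.

Definition bounded_poset_on {T : Type} (A : T -> Prop) (le : T -> T -> Prop)
  (z o : T) : Prop :=
  A z /\ A o /\
  (forall x, A x -> le x x) /\
  (forall x y, A x -> A y -> le x y -> le y x -> x = y) /\
  (forall x y w, A x -> A y -> A w -> le x y -> le y w -> le x w) /\
  (forall x, A x -> le z x /\ le x o).

Definition complementation_on {T : Type} (A : T -> Prop) (le : T -> T -> Prop)
  (c : T -> T) (z o : T) : Prop :=
  (forall x, A x -> A (c x)) /\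
  (forall x y, A x -> A y -> le x y -> le (c y) (c x)) /\
  (forall x, A x -> c (c x) = x) /\
  (forall x, A x -> forall y, LA A le (pair2 x (c x)) y <-> y = z) /\
  (forall x, A x -> forall y, UA A le (pair2 x (c x)) y <-> y = o).

(* L(U(x,y),w) = L(U(L(x,w),L(y,w))) computed inside A *)
Definition distributive_on {T : Type} (A : T -> Prop) (le : T -> T -> Prop) : Prop :=
  forall x y w, A x -> A y -> A w -> forall t,
    LA A le (union (UA A le (pair2 x y)) (single w)) t <->
    LA A le (UA A le (union (LA A le (pair2 x w)) (LA A le (pair2 y w)))) t.

Definition boolean_poset_on {T : Type} (A : T -> Prop) (le : T -> T -> Prop)
  (c : T -> T) (z o : T) : Prop :=
  bounded_poset_on A le z o /\ complementation_on A le c z o /\ distributive_on A le.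

(* (T, le, c, z, o) is the horizontal sum of the Boolean posets
   (P i, le|P i, c|P i, z, o), i : I  (internal description). *)
Definition horizontal_sum_of {T I : Type} (le : T -> T -> Prop) (c : T -> T)
  (z o : T) (P : I -> T -> Prop) : Prop :=
  bounded_poset_on (fun _ => True) le z o /\
  (forall i, boolean_poset_on (P i) le c z o) /\
  (forall x, exists i, P i x) /\
  (forall i j x, i <> j -> P i x -> P j x -> x = z \/ x = o) /\
  (forall x y, le x y -> x = z \/ y = o \/ exists i, P i x /\ P i y).

Definition dm_closed {T : Type} (le : T -> T -> Prop) (B : T -> Prop) : Prop :=
  forall x, Lb le (Ub le B) x <-> B x.

Definition DM {T : Type} (le : T -> T -> Prop) := { B : T -> Prop | dm_closed le B }.

Definition dm_le {T : Type} {le : T -> T -> Prop} (X Y : DM le) : Prop :=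
  forall x, proj1_sig X x -> proj1_sig Y x.

Lemma LUL_closed {T : Type} (le : T -> T -> Prop) (M : T -> Prop) :
  dm_closed le (Lb le M).
Proof.
  intro x; split.
  - intros H m Hm. apply H. intros y Hy. exact (Hy m Hm).
  - intros H u Hu. exact (Hu x H).
Qed.

Lemma inter_closed {T : Type} (le : T -> T -> Prop) (X Y : DM le) :
  dm_closed le (inter (proj1_sig X) (proj1_sig Y)).
Proof.
  destruct X as [X HX], Y as [Y HY]; simpl; intro x; split.
  - intro H; split.
    + apply HX; intros u Hu; apply H; intros m [Hm _]; exact (Hu m Hm).
    + apply HY; intros u Hu; apply H; intros m [_ Hm]; exact (Hu m Hm).
  - intros H u Hu; exact (Hu x H).
Qed.

Lemma top_closed {T : Type} (le : T -> T -> Prop) : dm_closed le (fun _ => True).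
Proof. intro x; split; [ intros; exact I | intros _ u Hu; exact (Hu x I) ]. Qed.

Definition dm_meet {T : Type} {le : T -> T -> Prop} (X Y : DM le) : DM le :=
  exist _ (inter (proj1_sig X) (proj1_sig Y)) (inter_closed X Y).
Definition dm_join {T : Type} {le : T -> T -> Prop} (X Y : DM le) : DM le :=
  exist _ (Lb le (Ub le (union (proj1_sig X) (proj1_sig Y))))
          (LUL_closed le (Ub le (union (proj1_sig X) (proj1_sig Y)))).
Definition dm_compl {T : Type} {le : T -> T -> Prop} (c : T -> T) (X : DM le) : DM le :=
  exist _ (Lb le (fun u => exists v, proj1_sig X v /\ u = c v))
          (LUL_closed le (fun u => exists v, proj1_sig X v /\ u = c v)).
Definition dm_top {T : Type} (le : T -> T -> Prop) : DM le :=
  exist _ (fun _ => True) (top_closed le).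
(* least element L(U(empty)) = L(T) *)
Definition dm_bot {T : Type} (le : T -> T -> Prop) : DM le :=
  exist _ (Lb le (fun _ => True)) (LUL_closed le (fun _ => True)).

Definition dm_is_sup {T : Type} {le : T -> T -> Prop} (F : DM le -> Prop) (S : DM le) : Prop :=
  (forall X, F X -> dm_le X S) /\ (forall S', (forall X, F X -> dm_le X S') -> dm_le S S').
Definition dm_is_inf {T : Type} {le : T -> T -> Prop} (F : DM le -> Prop) (S : DM le) : Prop :=
  (forall X, F X -> dm_le S X) /\ (forall S', (forall X, F X -> dm_le S' X) -> dm_le S' S).

(* DM-transforms of M(x,y) = L(U(x,y'),y) and R(x,y) = L(U(L(x,y),x')) *)
Definition dm_odot {T : Type} {le : T -> T -> Prop} (c : T -> T) (X Y : DM le) : DM le :=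
  dm_meet (dm_join X (dm_compl c Y)) Y.
Definition dm_impl {T : Type} {le : T -> T -> Prop} (c : T -> T) (X Y : DM le) : DM le :=
  dm_join (dm_meet X Y) (dm_compl c X).

(* Main.v *)
Require Import Defs.
From Stdlib Require Import Classical FunctionalExtensionality PropExtensionality ProofIrrelevance.

Lemma dm_ext {T : Type} {le : T -> T -> Prop} (X Y : DM le) :
  (forall x, proj1_sig X x <-> proj1_sig Y x) -> X = Y.
Proof.
  destruct X as [X HX], Y as [Y HY]; simpl; intro H.
  assert (X = Y) by (apply functional_extensionality; intro x; apply propositional_extensionality; auto).
  subst; f_equal; apply proof_irrelevance.
Qed.

Lemma dm_refl {T} {le : T -> T -> Prop} (X : DM le) : dm_le X X.
Proof. intros x H; exact H. Qed.
Lemma dm_trans {T} {le : T -> T -> Prop} (X Y Z : DM le) : dm_le X Y -> dm_le Y Z -> dm_le X Z.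
Proof. intros H1 H2 x Hx; auto. Qed.
Lemma dm_anti {T} {le : T -> T -> Prop} (X Y : DM le) : dm_le X Y -> dm_le Y X -> X = Y.
Proof. intros H1 H2; apply dm_ext; intro x; split; auto. Qed.

Lemma in_LU {T} (le : T -> T -> Prop) (B : T -> Prop) x : B x -> Lb le (Ub le B) x.
Proof. intros H u Hu; exact (Hu x H). Qed.

Lemma meet_l {T} {le : T -> T -> Prop} (X Y : DM le) : dm_le (dm_meet X Y) X.
Proof. intros x [H _]; exact H. Qed.
Lemma meet_r {T} {le : T -> T -> Prop} (X Y : DM le) : dm_le (dm_meet X Y) Y.
Proof. intros x [_ H]; exact H. Qed.
Lemma meet_glb {T} {le : T -> T -> Prop} (X Y W : DM le) :
  dm_le W X -> dm_le W Y -> dm_le W (dm_meet X Y).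
Proof. intros H1 H2 x Hx; split; auto. Qed.
Lemma join_l {T} {le : T -> T -> Prop} (X Y : DM le) : dm_le X (dm_join X Y).
Proof. intros x Hx; apply in_LU; left; exact Hx. Qed.
Lemma join_r {T} {le : T -> T -> Prop} (X Y : DM le) : dm_le Y (dm_join X Y).
Proof. intros x Hx; apply in_LU; right; exact Hx. Qed.
Lemma join_lub {T} {le : T -> T -> Prop} (X Y W : DM le) :
  dm_le X W -> dm_le Y W -> dm_le (dm_join X Y) W.
Proof.
  destruct W as [W HW]; intros H1 H2 x Hx; simpl in *.
  apply HW; intros u Hu; apply Hx; intros m [Hm|Hm]; apply Hu; [apply H1 | apply H2]; exact Hm.
Qed.
Lemma bot_le {T} {le : T -> T -> Prop} (X : DM le) : dm_le (dm_bot le) X.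
Proof.
  destruct X as [X HX]; intros x Hx; simpl in *.
  apply HX; intros u _; apply Hx; exact I.
Qed.
Lemma le_top {T} {le : T -> T -> Prop} (X : DM le) : dm_le X (dm_top le).
Proof. intros x _; exact I. Qed.

Definition OMprops {T} (le : T -> T -> Prop) (c : T -> T) : Prop :=
  (forall X Y : DM le, dm_le X Y -> dm_le (dm_compl c Y) (dm_compl c X)) /\
  (forall X : DM le, dm_compl c (dm_compl c X) = X) /\
  (forall X : DM le, dm_meet X (dm_compl c X) = dm_bot le) /\
  (forall Y W : DM le, dm_le Y W -> dm_meet W (dm_compl c Y) = dm_bot le -> W = Y).


Lemma abs_all {T} (le : T -> T -> Prop) (c : T -> T) : OMprops le c ->
  (forall X : DM le, dm_meet X (dm_compl c X) = dm_bot le /\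
                     dm_join X (dm_compl c X) = dm_top le) /\
  (forall X Y : DM le,
     dm_join X Y = dm_join (dm_meet (dm_join X Y) (dm_compl c Y)) Y) /\
  (forall X : DM le, dm_odot c X (dm_top le) = X /\ dm_odot c (dm_top le) X = X) /\
  (forall X Y Z : DM le, dm_le (dm_odot c X Y) Z <-> dm_le X (dm_impl c Y Z)).
Proof.
  intros [canti [cinv [mcomp omstar]]].
  assert (le_comp : forall X Y : DM le, dm_le X (dm_compl c Y) -> dm_le Y (dm_compl c X)).
  { intros X Y H. rewrite <- (cinv Y). apply canti; exact H. }
  assert (comp_le : forall X Y : DM le, dm_le (dm_compl c X) Y -> dm_le (dm_compl c Y) X).
  { intros X Y H. rewrite <- (cinv X). apply canti; exact H. }
  assert (dmj : forall X Y : DM le, dm_compl c (dm_join X Y) = dm_meet (dm_compl c X) (dm_compl c Y)).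
  { intros X Y; apply dm_anti.
    - apply meet_glb; apply canti; [apply join_l | apply join_r].
    - apply le_comp. apply join_lub; apply le_comp;
        [apply meet_l | apply meet_r]. }
  assert (dmm : forall X Y : DM le, dm_compl c (dm_meet X Y) = dm_join (dm_compl c X) (dm_compl c Y)).
  { intros X Y. rewrite <- (cinv X) at 1. rewrite <- (cinv Y) at 1.
     rewrite <- dmj. apply cinv. }
  assert (ctop : dm_compl c (dm_top le) = dm_bot le).
  { apply dm_anti; [|apply bot_le].
    rewrite <- (mcomp (dm_top le)). apply meet_glb; [apply le_top | apply dm_refl]. }
  assert (cbot : dm_compl c (dm_bot le) = dm_top le).
  { rewrite <- ctop. apply cinv. }
  assert (OM : forall Y W : DM le, dm_le Y W -> W = dm_join (dm_meet W (dm_compl c Y)) Y).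
  { intros Y W H. apply omstar.
    - apply join_lub; [apply meet_l | exact H].
    - apply dm_anti; [|apply bot_le].
      rewrite <- (mcomp (dm_join (dm_meet W (dm_compl c Y)) Y)).
      apply meet_glb; [|apply meet_r].
      apply dm_trans with (dm_meet W (dm_compl c Y)); [|apply join_l].
      apply meet_glb; [apply meet_l|].
      apply dm_trans with (dm_compl c (dm_join (dm_meet W (dm_compl c Y)) Y)); [apply meet_r|].
      apply canti; apply join_r. }
  assert (DOM : forall A Y : DM le, dm_le A Y -> dm_meet (dm_join A (dm_compl c Y)) Y = A).
  { intros A0 Y H.
    assert (H' : dm_le (dm_compl c Y) (dm_compl c A0)) by (apply canti; exact H).
    pose proof (OM _ _ H') as E.
    rewrite (cinv Y) in E.
    assert (E2 : dm_compl c (dm_compl c A0) = dm_compl c (dm_join (dm_meet (dm_compl c A0) Y) (dm_compl c Y))) by (f_equal; exact E).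
    rewrite cinv, dmj, dmm, cinv, cinv in E2. symmetry; exact E2. }
  assert (join_bot : forall X : DM le, dm_join X (dm_bot le) = X).
  { intro X; apply dm_anti; [apply join_lub; [apply dm_refl|apply bot_le] | apply join_l]. }
  assert (meet_top : forall X : DM le, dm_meet X (dm_top le) = X).
  { intro X; apply dm_anti; [apply meet_l | apply meet_glb; [apply dm_refl|apply le_top]]. }
  assert (meet_top_l : forall X : DM le, dm_meet (dm_top le) X = X).
  { intro X; apply dm_anti; [apply meet_r | apply meet_glb; [apply le_top|apply dm_refl]]. }
  assert (join_top_l : forall X : DM le, dm_join (dm_top le) X = dm_top le).
  { intro X; apply dm_anti; [apply le_top | apply join_l]. }
  split; [|split; [|split]].
  - intro X; split; [apply mcomp|].
    rewrite <- (cinv (dm_join X (dm_compl c X))). 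
    rewrite dmj, cinv.
    assert (E : dm_meet (dm_compl c X) X = dm_bot le) by (rewrite <- (cinv X) at 2; apply mcomp).
    rewrite E; exact cbot.
  - intros X Y. apply OM. apply join_r.
  - intro X; unfold dm_odot;  split.
    + rewrite ctop, join_bot, meet_top; reflexivity.
    + rewrite join_top_l, meet_top_l; reflexivity.
  - intros X Y Z; unfold dm_odot, dm_impl;  split; intro H.
    + apply dm_trans with (dm_join X (dm_compl c Y)); [apply join_l|].
      rewrite (OM (dm_compl c Y) (dm_join X (dm_compl c Y)) (join_r _ _)) at 1.
      rewrite cinv. apply join_lub; [|apply join_r].
      apply dm_trans with (dm_meet Y Z); [|apply join_l].
      apply meet_glb; [apply meet_r | exact H].
    + apply dm_trans with (dm_meet Y Z); [|apply meet_r].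
      rewrite <- (DOM (dm_meet Y Z) Y (meet_l _ _)).
      apply meet_glb; [|apply meet_r].
      apply dm_trans with (dm_join X (dm_compl c Y)); [apply meet_l|].
      apply join_lub; [exact H | apply join_r].
Qed.

Lemma hs_refl {T Lam} {le : T -> T -> Prop} {c z o} {P : Lam -> T -> Prop} :
  horizontal_sum_of le c z o P -> forall x, le x x.
Proof. intros [[_ [_ [H _]]] _] x; exact (H x I). Qed.
Lemma hs_anti {T Lam} {le : T -> T -> Prop} {c z o} {P : Lam -> T -> Prop} :
  horizontal_sum_of le c z o P -> forall x y, le x y -> le y x -> x = y.
Proof. intros [[_ [_ [_ [H _]]]] _] x y; apply H; exact I. Qed.
Lemma hs_trans {T Lam} {le : T -> T -> Prop} {c z o} {P : Lam -> T -> Prop} :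
  horizontal_sum_of le c z o P -> forall x y w, le x y -> le y w -> le x w.
Proof. intros [[_ [_ [_ [_ [H _]]]]] _] x y w; apply H; exact I. Qed.
Lemma hs_z {T Lam} {le : T -> T -> Prop} {c z o} {P : Lam -> T -> Prop} :
  horizontal_sum_of le c z o P -> forall x, le z x.
Proof. intros [[_ [_ [_ [_ [_ H]]]]] _] x; exact (proj1 (H x I)). Qed.
Lemma hs_o {T Lam} {le : T -> T -> Prop} {c z o} {P : Lam -> T -> Prop} :
  horizontal_sum_of le c z o P -> forall x, le x o.
Proof. intros [[_ [_ [_ [_ [_ H]]]]] _] x; exact (proj2 (H x I)). Qed.
Lemma hs_block {T Lam} {le : T -> T -> Prop} {c z o} {P : Lam -> T -> Prop} :
  horizontal_sum_of le c z o P -> forall x, exists i, P i x.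
Proof. intros [_ [_ [H _]]]; exact H. Qed.
Lemma hs_disj {T Lam} {le : T -> T -> Prop} {c z o} {P : Lam -> T -> Prop} :
  horizontal_sum_of le c z o P -> forall i j x, i <> j -> P i x -> P j x -> x = z \/ x = o.
Proof. intros [_ [_ [_ [H _]]]]; exact H. Qed.
Lemma hs_cmp {T Lam} {le : T -> T -> Prop} {c z o} {P : Lam -> T -> Prop} :
  horizontal_sum_of le c z o P -> forall x y, le x y -> x = z \/ y = o \/ exists i, P i x /\ P i y.
Proof. intros [_ [_ [_ [_ H]]]]; exact H. Qed.
Lemma hs_bool {T Lam} {le : T -> T -> Prop} {c z o} {P : Lam -> T -> Prop} :
  horizontal_sum_of le c z o P -> forall i, boolean_poset_on (P i) le c z o.
Proof. intros [_ [H _]]; exact H. Qed.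

Lemma hs_cinv {T Lam} {le : T -> T -> Prop} {c z o} {P : Lam -> T -> Prop} :
  horizontal_sum_of le c z o P -> forall x, c (c x) = x.
Proof.
  intros HS x. destruct (hs_block HS x) as [i Hi].
  destruct (hs_bool HS i) as [_ [[_ [_ [H _]]] _]]. auto.
Qed.

Lemma hs_cz {T Lam} {le : T -> T -> Prop} {c z o} {P : Lam -> T -> Prop} :
  horizontal_sum_of le c z o P -> c z = o.
Proof.
  intros HS. destruct (hs_block HS z) as [i Hi].
  destruct (hs_bool HS i) as [_ [[Hc [_ [_ [_ HU]]]] _]].
  apply (HU z Hi (c z)). split; [apply Hc; exact Hi|].
  intros m [->| ->]; [apply (hs_z HS) | apply (hs_refl HS)].
Qed.

Lemma hs_co {T Lam} {le : T -> T -> Prop} {c z o} {P : Lam -> T -> Prop} :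
  horizontal_sum_of le c z o P -> c o = z.
Proof.
  intros HS. destruct (hs_block HS o) as [i Hi].
  destruct (hs_bool HS i) as [_ [[Hc [_ [_ [HL _]]]] _]].
  apply (HL o Hi (c o)). split; [apply Hc; exact Hi|].
  intros m [->| ->]; [apply (hs_o HS) | apply (hs_refl HS)].
Qed.

Lemma hs_canti {T Lam} {le : T -> T -> Prop} {c z o} {P : Lam -> T -> Prop} :
  horizontal_sum_of le c z o P -> forall x y, le x y -> le (c y) (c x).
Proof.
  intros HS x y H. destruct (hs_cmp HS x y H) as [->|[->|[i [Hx Hy]]]].
  - rewrite (hs_cz HS); apply (hs_o HS).
  - rewrite (hs_co HS); apply (hs_z HS).
  - destruct (hs_bool HS i) as [_ [[_ [Ha _]] _]]. auto.
Qed.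

Lemma dm_lower {T} {le : T -> T -> Prop} (trans : forall x y w, le x y -> le y w -> le x w)
  (X : DM le) x t : proj1_sig X x -> le t x -> proj1_sig X t.
Proof.
  destruct X as [X HX]; simpl; intros Hx Ht. apply HX; intros u Hu.
  apply trans with x; [exact Ht | exact (Hu x Hx)].
Qed.

Lemma hs_OM {T Lam} {le : T -> T -> Prop} {c z o} {P : Lam -> T -> Prop} :
  horizontal_sum_of le c z o P -> OMprops le c.
Proof.
  intros HS.
  pose proof (hs_refl HS) as Rr. pose proof (hs_trans HS) as Rt.
  pose proof (hs_anti HS) as Ra. pose proof (hs_canti HS) as Rc.
  pose proof (hs_cinv HS) as Ri.
  split; [|split; [|split]].
  - intros X Y H x Hx; simpl in *. intros m [v [Hv ->]]. apply Hx. exists v; split; auto.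
  - intros X; apply dm_ext; intro t; simpl. split.
    + intro H. destruct X as [X HX]; simpl in *. apply HX. intros m Hm.
      rewrite <- (Ri m). apply H. exists (c m); split; [|rewrite Ri; reflexivity].
      intros u [v [Hv ->]]. apply Rc. exact (Hm v Hv).
    + intros Ht m [v [Hv ->]]. rewrite <- (Ri t). apply Rc. apply Hv. exists t; auto.
  - intros X; apply dm_ext; intro t; simpl. split.
    + intros [Hx Hc] u _.
      assert (t = z).
      { destruct (hs_block HS t) as [i Hi].
        destruct (hs_bool HS i) as [_ [[_ [_ [_ [HL _]]]] _]].
        apply (HL t Hi t). split; [exact Hi|].
        intros m [->| ->]; [apply Rr | apply Hc; exists t; split; auto]. }
      subst; apply (hs_z HS).
    + intros H. split.
      * destruct X as [X HX]; simpl. apply HX. intros u _; apply H; exact I.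
      * intros m _; apply H; exact I.
  - intros Y W HYW Hb.
    assert (Hbot : forall t, proj1_sig W t ->
              Lb le (fun u => exists v, proj1_sig Y v /\ u = c v) t -> t = z).
    { intros t H1 H2.
      assert (Hin : proj1_sig (dm_meet W (dm_compl c Y)) t) by (simpl; split; assumption).
      rewrite Hb in Hin. simpl in Hin. apply Ra; [apply Hin; exact I | apply (hs_z HS)]. }
    apply dm_anti; [|exact HYW]. intros w Hw.
    apply (proj1 (proj2_sig Y w)). intros u Hu.
    assert (K : forall t, le t w -> le t (c u) -> t = z).
    { intros t H1 H2. apply Hbot.
      - apply (dm_lower Rt W w t Hw H1).
      - intros m [v [Hv ->]]. apply Rt with (c u); [exact H2|]. apply Rc. exact (Hu v Hv). }
    destruct (classic (u = o)) as [Huo|Huo]; [subst; apply (hs_o HS)|].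
    destruct (classic (w = z)) as [Hwz|Hwz]; [subst; apply (hs_z HS)|].
    destruct (classic (exists i, P i w /\ P i u)) as [[i [Hwi Hui]]|Hnb].
    + destruct (hs_bool HS i) as [_ [[Hc [_ [_ [HL HU]]]] Hd]].
      pose proof (Hd u (c u) w Hui (Hc u Hui) Hwi w) as [D _].
      assert (Hl : LA (P i) le (union (UA (P i) le (pair2 u (c u))) (single w)) w).
      { split; [exact Hwi|]. intros m [Hm | Hm].
        - rewrite (proj1 (HU u Hui m) Hm). apply (hs_o HS).
        - rewrite Hm; apply Rr. }
      destruct (D Hl) as [_ Hlb]. apply Hlb. split; [exact Hui|].
      intros m [[_ Hm] | [_ Hm]].
      * apply Hm; left; reflexivity.
      * assert (m = z) as -> by (apply K; [apply Hm; right; reflexivity | apply Hm; left; reflexivity]).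
        apply (hs_z HS).
    + exfalso.
      destruct (classic (exists y, proj1_sig Y y /\ y <> z)) as [[y [Hy Hyz]]|Hny].
      * pose proof (Hu y Hy) as Hyu.
        destruct (hs_cmp HS y u Hyu) as [E|[E|[j [Hyj Huj]]]]; [contradiction|contradiction|].
        assert (HcuW : proj1_sig W (c u)).
        { apply (proj1 (proj2_sig W (c u))). intros v Hv.
          assert (v = o) as ->; [|apply (hs_o HS)].
          pose proof (Hv w Hw) as Hwv. pose proof (Hv y (HYW y Hy)) as Hyv.
          destruct (hs_cmp HS w v Hwv) as [E|[E|[k1 [Hwk Hvk]]]]; [contradiction|exact E|].
          destruct (hs_cmp HS y v Hyv) as [E|[E|[k2 [Hyk Hvk2]]]]; [contradiction|exact E|].
          destruct (classic (k1 = k2)) as [<-|Hk].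
          - destruct (classic (k1 = j)) as [<-|Hkj].
            + exfalso; apply Hnb; exists k1; split; assumption.
            + destruct (hs_disj HS k1 j y Hkj Hyk Hyj) as [E|E]; [contradiction|].
              exfalso; apply Huo. apply Ra; [apply (hs_o HS)|]. rewrite <- E; exact Hyu.
          - destruct (hs_disj HS k1 k2 v Hk Hvk Hvk2) as [E|E]; [|exact E].
            exfalso; apply Hwz. apply Ra; [rewrite <- E; exact Hwv | apply (hs_z HS)]. }
        assert (E : c u = z).
        { apply Hbot; [exact HcuW|]. intros m [v [Hv ->]]. apply Rc. exact (Hu v Hv). }
        apply Huo. rewrite <- (Ri u), E. apply (hs_cz HS).
      * apply Hwz. apply Hbot; [exact Hw|].
        intros m [v [Hv ->]].
        destruct (classic (v = z)) as [->|Hvz]; [|exfalso; apply Hny; exists v; auto].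
        rewrite (hs_cz HS). apply (hs_o HS).
Qed.

Lemma dm_complete {T} {le : T -> T -> Prop} (F : DM le -> Prop) :
  (exists S, dm_is_sup F S) /\ (exists I, dm_is_inf F I).
Proof.
  split.
  - pose (U := fun x => exists X : DM le, F X /\ proj1_sig X x).
    exists (exist _ (Lb le (Ub le U)) (LUL_closed le (Ub le U))). split.
    + intros X HX x Hx; simpl. apply in_LU. exists X; auto.
    + intros S' HS' x Hx; simpl in Hx. apply (proj1 (proj2_sig S' x)).
      intros m Hm. apply Hx. intros y [X [HX Hy]]. apply Hm. exact (HS' X HX y Hy).
  - assert (Hc : dm_closed le (fun x => forall X : DM le, F X -> proj1_sig X x)).
    { intro x; split.
      - intros H X HX. apply (proj1 (proj2_sig X x)). intros m Hm. apply H.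
        intros y Hy. exact (Hm y (Hy X HX)).
      - intros H. apply in_LU; exact H. }
    exists (exist _ _ Hc). split.
    + intros X HX x Hx; exact (Hx X HX).
    + intros S' HS' x Hx X HX. exact (HS' X HX x Hx).
Qed.

Theorem corollary1 (T : Type) (le : T -> T -> Prop) (c : T -> T) (z o : T)
  (Lambda : Type) (P : Lambda -> T -> Prop) :
  horizontal_sum_of le c z o P ->
  (* DM(P), ordered by inclusion, is a complete lattice *)
  (forall F : DM le -> Prop, (exists S, dm_is_sup F S) /\ (exists I, dm_is_inf F I)) /\
  (forall X Y : DM le, dm_is_sup (pair2 X Y) (dm_join X Y) /\
                       dm_is_inf (pair2 X Y) (dm_meet X Y)) /\
  (* X |-> X' is a complementation *)
  (forall X Y : DM le, dm_le X Y -> dm_le (dm_compl c Y) (dm_compl c X)) /\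
  (forall X : DM le, dm_compl c (dm_compl c X) = X) /\
  (forall X : DM le, dm_meet X (dm_compl c X) = dm_bot le /\
                     dm_join X (dm_compl c X) = dm_top le) /\
  (* orthomodularity *)
  (forall X Y : DM le,
     dm_join X Y = dm_join (dm_meet (dm_join X Y) (dm_compl c Y)) Y) /\
  (* left residuation w.r.t. x.y = (x v y') ^ y and x -> y = (x ^ y) v x' *)
  (forall X : DM le, dm_odot c X (dm_top le) = X /\ dm_odot c (dm_top le) X = X) /\
  (forall X Y Z : DM le, dm_le (dm_odot c X Y) Z <-> dm_le X (dm_impl c Y Z)).
Proof.
  intros HS.
  pose proof (hs_OM HS) as HOM.
  pose proof (abs_all le c HOM) as [A1 [A2 [A3 A4]]].
  destruct HOM as [H1 [H2 _]].
  split; [apply dm_complete|].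
  split.
  { intros X Y; split; split.
    - intros W [->| ->]; [apply join_l | apply join_r].
    - intros S' HS'. apply join_lub; apply HS'; [left|right]; reflexivity.
    - intros W [->| ->]; [apply meet_l | apply meet_r].
    - intros S' HS'. apply meet_glb; apply HS'; [left|right]; reflexivity. }
  repeat split; auto; try apply A1; try apply A4; try apply A3.
Qed.
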